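(* Let $M \in \mathbb{R}^{d' \times n}$ and $B \in \mathbb{R}^{n \times d}$ be Gale dual, i.e. $\mathrm{im}(B)=\ker(M)$ and $\ker(B)=\{0\}$. Let $S \subseteq \mathbb{R}^n$ be a vector subspace and $A \in \mathbb{R}^{m \times n}$ with $S = \ker(A)$. The following are equivalent: (i) the map $x \mapsto x^M$ is injective on $(x'+S) \cap \mathbb{R}^n_+$ for all $x' \in \mathbb{R}^n_+$; (ii) $\sigma(\ker(M)) \cap \sigma(S) = \{0\}$; (iii) for every $x^* \in \mathbb{R}^n_+$, the map $f_{x^*}\colon \mathbb{R}^d_+ \to \mathbb{R}^m$, $\xi \mapsto A_{x^*}\, \xi^B$, is injective.
   Context: $\mathbb{R}_+$ denotes the strictly positive reals. For $x\in\mathbb{R}^n_+$, $(x^M)_k=\prod_i x_i^{m_{ki}}$; for $\xi\in\mathbb{R}^d_+$, $(\xi^B)_i=\prod_{j}\xi_j^{b_{ij}}$ (real exponents). $A_{x^*}=A\,\mathrm{diag}(x^* )$. $\sigma$ is the componentwise sign vector, $\sigma(T)=\{\sigma(x)\mid x\in T\}$, and $0$ denotes the zero sign vector. *)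

(* Defs.v *)
From Stdlib Require Import Reals.
Open Scope R_scope.

(* Vectors in R^n are functions nat -> R, only indices i < n matter.
   Matrices in R^{p x q} are functions nat -> nat -> R (row, column). *)

Fixpoint sumR (n : nat) (f : nat -> R) : R :=
  match n with O => 0 | Datatypes.S k => sumR k f + f k end.

Fixpoint prodR (n : nat) (f : nat -> R) : R :=
  match n with O => 1 | Datatypes.S k => prodR k f * f k end.

Definition mulv (q : nat) (M : nat -> nat -> R) (x : nat -> R) : nat -> R :=
  fun k => sumR q (fun i => M k i * x i).

Definition eqv (n : nat) (x y : nat -> R) : Prop := forall i, (i < n)%nat -> x i = y i.

Definition posv (n : nat) (x : nat -> R) : Prop := forall i, (i < n)%nat -> 0 < x i.

Definition monom (n : nat) (M : nat -> nat -> R) (x : nat -> R) : nat -> R :=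
  fun k => prodR n (fun i => Rpower (x i) (M k i)).

(* A_{xs} = A diag(xs) *)
Definition scale_cols (A : nat -> nat -> R) (xs : nat -> R) : nat -> nat -> R :=
  fun k i => A k i * xs i.

Definition inker (p q : nat) (M : nat -> nat -> R) (x : nat -> R) : Prop :=
  eqv p (mulv q M x) (fun _ => 0).

Definition sgn (r : R) : Z :=
  match Rlt_dec 0 r with
  | left _ => 1%Z
  | right _ => match Rlt_dec r 0 with left _ => (-1)%Z | right _ => 0%Z end
  end.

Definition same_sign (n : nat) (x y : nat -> R) : Prop :=
  forall i, (i < n)%nat -> sgn (x i) = sgn (y i).

Definition sign_zero (n : nat) (x : nat -> R) : Prop :=
  forall i, (i < n)%nat -> sgn (x i) = 0%Z.

Definition gale_dual (d' n d : nat) (M B : nat -> nat -> R) : Prop :=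
  (forall y, inker d' n M y <-> exists xi, eqv n y (mulv d B xi)) /\
  (forall xi, inker n d B xi -> eqv d xi (fun _ => 0)).

(* Main.v *)
Require Import Defs.
From Stdlib Require Import Reals Lra.
Open Scope R_scope.

Lemma sumR_ext n f g : (forall i, (i < n)%nat -> f i = g i) -> sumR n f = sumR n g.
Proof. induction n; simpl; intros H; auto. rewrite IHn; [rewrite H|]; auto. Qed.

Lemma sumR_minus n f g : sumR n (fun i => f i - g i) = sumR n f - sumR n g.
Proof. induction n; simpl; [ring|rewrite IHn; ring]. Qed.

Lemma sumR_zero n : sumR n (fun _ => 0) = 0.
Proof. induction n; simpl; [ring|rewrite IHn; ring]. Qed.

Lemma prodR_exp n f : prodR n (fun i => exp (f i)) = exp (sumR n f).
Proof. induction n; simpl. now rewrite exp_0. rewrite IHn, exp_plus; ring. Qed.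

Lemma monom_exp n M x k : monom n M x k = exp (mulv n M (fun i => ln (x i)) k).
Proof. unfold monom, mulv, Rpower. apply prodR_exp. Qed.

Lemma mulv_minus q M f g k :
  mulv q M (fun i => f i - g i) k = mulv q M f k - mulv q M g k.
Proof.
  unfold mulv. rewrite <- sumR_minus. apply sumR_ext; intros; ring.
Qed.

Lemma sgn_pos r : 0 < r -> sgn r = 1%Z.
Proof. intros; unfold sgn; destruct (Rlt_dec 0 r); [auto|lra]. Qed.
Lemma sgn_neg r : r < 0 -> sgn r = (-1)%Z.
Proof. intros; unfold sgn; destruct (Rlt_dec 0 r); [lra|]; destruct (Rlt_dec r 0); [auto|lra]. Qed.
Lemma sgn_0 : sgn 0 = 0%Z.
Proof. unfold sgn; destruct (Rlt_dec 0 0); [lra|]; destruct (Rlt_dec 0 0); [lra|auto]. Qed.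

Lemma sgn_cases r : (0 < r /\ sgn r = 1%Z) \/ (r < 0 /\ sgn r = (-1)%Z) \/ (r = 0 /\ sgn r = 0%Z).
Proof.
  destruct (total_order_T 0 r) as [[H|H]|H].
  - left; split; auto; apply sgn_pos; auto.
  - right; right; subst; split; auto; apply sgn_0.
  - right; left; split; auto; apply sgn_neg; auto.
Qed.

Lemma sgn_zero_eq r : sgn r = 0%Z -> r = 0.
Proof. intros H; destruct (sgn_cases r) as [[_ E]|[[_ E]|[E _]]]; auto; congruence. Qed.

Lemma sgn_exp a b : sgn (exp a - exp b) = sgn (a - b).
Proof.
  destruct (total_order_T a b) as [[H|H]|H].
  - pose proof (exp_increasing _ _ H). rewrite !sgn_neg; try reflexivity; lra.
  - subst. replace (exp b - exp b) with 0 by ring. replace (b - b) with 0 by ring. auto.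
  - pose proof (exp_increasing _ _ H). rewrite !sgn_pos; try reflexivity; lra.
Qed.

Lemma sgn_ln a b : 0 < a -> 0 < b -> sgn (ln a - ln b) = sgn (a - b).
Proof.
  intros Ha Hb. rewrite <- sgn_exp, !exp_ln; auto.
Qed.

Lemma sgn_mulpos c r : 0 < c -> sgn (c * r) = sgn r.
Proof.
  intros Hc. destruct (sgn_cases r) as [[H E]|[[H E]|[H E]]]; rewrite E.
  - apply sgn_pos. apply Rmult_lt_0_compat; auto.
  - apply sgn_neg. replace (c*r) with (-(c*(-r))) by ring.
    assert (0 < c * (-r)) by (apply Rmult_lt_0_compat; lra). lra.
  - subst. rewrite Rmult_0_r. apply sgn_0.
Qed.

Definition yv (a b : R) : R :=
  if Req_EM_T a 0 then 1 else b / (exp a - 1).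

Lemma yv_spec a b : sgn a = sgn b -> 0 < yv a b /\ exp a * yv a b - yv a b = b.
Proof.
  intros H. unfold yv. destruct (Req_EM_T a 0) as [E|E].
  - subst. rewrite sgn_0 in H. symmetry in H. apply sgn_zero_eq in H. subst.
    rewrite exp_0. lra.
  - assert (Hs : sgn (exp a - exp 0) = sgn b) by (rewrite sgn_exp; replace (a-0) with a by ring; auto).
    rewrite exp_0 in Hs.
    assert (exp a - 1 <> 0).
    { intro Z. apply E. apply exp_inv. rewrite exp_0. lra. }
    split.
    + destruct (sgn_cases (exp a - 1)) as [[P Q]|[[P Q]|[P Q]]]; [| |contradiction];
      destruct (sgn_cases b) as [[P' Q']|[[P' Q']|[P' Q']]]; try congruence.
      * unfold Rdiv. apply Rmult_lt_0_compat; auto. apply Rinv_0_lt_compat; auto.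
      * unfold Rdiv. replace (b * / (exp a - 1)) with ((-b) * / (-(exp a - 1))).
        apply Rmult_lt_0_compat; [lra|apply Rinv_0_lt_compat; lra].
        field; auto.
    + field; auto.
Qed.

Lemma inker_ext m n A x y : (forall i, (i < n)%nat -> x i = y i) -> inker m n A x -> inker m n A y.
Proof.
  unfold inker, eqv, mulv. intros H K k Hk. rewrite <- (K k Hk). apply sumR_ext.
  intros; rewrite H; auto.
Qed.

Theorem mainTheorem17 (d' n d m : nat) (M B A : nat -> nat -> R)
  (S : (nat -> R) -> Prop)
  (HMB : gale_dual d' n d M B)
  (HS : forall x, S x <-> inker m n A x) :
  let cond_i :=
    forall x' : nat -> R, posv n x' ->
      forall x y : nat -> R, posv n x -> posv n y ->
        S (fun i => x i - x' i) -> S (fun i => y i - x' i) ->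
        eqv d' (monom n M x) (monom n M y) -> eqv n x y in
  let cond_ii :=
    forall u v : nat -> R, inker d' n M u -> S v ->
      same_sign n u v -> sign_zero n u in
  let cond_iii :=
    forall xs : nat -> R, posv n xs ->
      forall xi eta : nat -> R, posv d xi -> posv d eta ->
        eqv m (mulv n (scale_cols A xs) (monom d B xi))
              (mulv n (scale_cols A xs) (monom d B eta)) ->
        eqv d xi eta in
  (cond_i <-> cond_ii) /\ (cond_ii <-> cond_iii).
Proof.
  cbv zeta. destruct HMB as [HG HK].
  split; split.
  -
    intros Hi u v Hu Hv Hs i0 Hi0.
    set (y := fun i => yv (u i) (v i)).
    set (x := fun i => exp (u i) * y i).
    assert (Hy : posv n y) by (intros i Hi'; apply (yv_spec _ _ (Hs i Hi'))).
    assert (Hx : posv n x).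
    { intros i Hi'. unfold x. apply Rmult_lt_0_compat; [apply exp_pos|apply Hy; auto]. }
    assert (Hln : forall i, (i < n)%nat -> ln (x i) - ln (y i) = u i).
    { intros i Hi'. unfold x. rewrite ln_mult, ln_exp; [ring|apply exp_pos|apply Hy; auto]. }
    assert (E := Hi y Hy x y Hx Hy).
    assert (HE : eqv n x y).
    { apply E.
      - apply HS. apply inker_ext with (x := v).
        + intros i Hi'. unfold x. symmetry. apply (yv_spec _ _ (Hs i Hi')).
        + apply HS; auto.
      - apply HS. unfold inker, eqv, mulv. intros k _.
        rewrite <- (sumR_zero n). apply sumR_ext; intros; ring.
      - intros k Hk. rewrite !monom_exp. f_equal.
        apply Rminus_diag_uniq. rewrite <- mulv_minus.
        rewrite <- (Hu k Hk). unfold mulv. apply sumR_ext. intros; rewrite Hln; auto. }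
    rewrite <- (Hln i0 Hi0), (HE i0 Hi0). replace (ln (y i0) - ln (y i0)) with 0 by ring.
    apply sgn_0.
  -
    intros Hii x' Hx' x y Hx Hy Sx Sy Heq i0 Hi0.
    set (u := fun i => ln (x i) - ln (y i)).
    set (v := fun i => x i - y i).
    assert (Hu : inker d' n M u).
    { intros k Hk. unfold u. rewrite mulv_minus. pose proof (Heq k Hk) as H.
      rewrite !monom_exp in H. apply exp_inv in H. rewrite H; ring. }
    assert (Hv : S v).
    { apply HS. apply HS in Sx. apply HS in Sy. intros k Hk.
      pose proof (Sx k Hk) as H1. pose proof (Sy k Hk) as H2. cbv beta in *.
      unfold mulv in *. rewrite <- (Rminus_0_r 0) at 1. rewrite <- H1 at 1. rewrite <- H2.
      rewrite <- sumR_minus. apply sumR_ext; intros; unfold v; ring. }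
    assert (Hs : same_sign n u v).
    { intros i Hi'. unfold u, v. apply sgn_ln; auto. }
    pose proof (Hii u v Hu Hv Hs i0 Hi0) as H. apply sgn_zero_eq in H. unfold u in H.
    apply ln_inv; auto. lra.
  -
    intros Hii xs Hxs xi eta Hxi Heta Heq j0 Hj0.
    set (z := fun j => ln (xi j) - ln (eta j)).
    set (u := mulv d B z).
    set (v := fun i => xs i * (monom d B xi i - monom d B eta i)).
    assert (Hu : inker d' n M u) by (apply HG; exists z; intros i _; reflexivity).
    assert (Hv : S v).
    { apply HS. intros k Hk. pose proof (Heq k Hk) as H. unfold mulv, scale_cols in *.
      apply Rminus_diag_eq in H. rewrite <- sumR_minus in H. rewrite <- H.
      apply sumR_ext. intros; unfold v; ring. }
    assert (Hs : same_sign n u v).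
    { intros i Hi. unfold v. rewrite sgn_mulpos by auto. rewrite !monom_exp, sgn_exp.
      unfold u, z. rewrite mulv_minus. reflexivity. }
    assert (Hz : inker n d B z).
    { intros i Hi. apply sgn_zero_eq. apply (Hii u v Hu Hv Hs i Hi). }
    pose proof (HK z Hz j0 Hj0) as H. unfold z in H. apply ln_inv; auto. lra.
  -
    intros Hiii u v Hu Hv Hs i0 Hi0.
    destruct (proj1 (HG u) Hu) as [z Hz].
    set (xs := fun i => yv (u i) (v i)).
    assert (Hxs : posv n xs) by (intros i Hi'; apply (yv_spec _ _ (Hs i Hi'))).
    set (xi := fun j => exp (z j)).
    set (eta := fun j : nat => 1).
    assert (Hxi : posv d xi) by (intros j _; apply exp_pos).
    assert (Heta : posv d eta) by (intros j _; unfold eta; lra).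
    assert (Mxi : forall i, (i < n)%nat -> monom d B xi i = exp (u i)).
    { intros i Hi. rewrite monom_exp, (Hz i Hi). f_equal. unfold mulv. apply sumR_ext.
      intros; unfold xi; rewrite ln_exp; auto. }
    assert (Meta : forall i, monom d B eta i = 1).
    { intros i. rewrite monom_exp. transitivity (exp 0); [f_equal|apply exp_0].
      unfold mulv. rewrite <- (sumR_zero d). apply sumR_ext; intros; unfold eta; rewrite ln_1; ring. }
    assert (HE : eqv d xi eta).
    { apply (Hiii xs Hxs xi eta Hxi Heta). intros k Hk. apply Rminus_diag_uniq.
      unfold mulv, scale_cols. rewrite <- sumR_minus.
      apply HS in Hv. pose proof (Hv k Hk) as H. unfold mulv in H. cbv beta in H.
      rewrite <- H. apply sumR_ext. intros i Hi. rewrite Mxi, Meta by auto.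
      replace (v i) with (exp (u i) * xs i - xs i) by (unfold xs; exact (proj2 (yv_spec _ _ (Hs i Hi)))). ring. }

    rewrite (Hz i0 Hi0). unfold mulv.
    replace (sumR d (fun j => B i0 j * z j)) with 0. apply sgn_0.
    rewrite <- (sumR_zero d). apply sumR_ext. intros j Hj.
    pose proof (HE j Hj) as H. unfold xi, eta in H. rewrite <- exp_0 in H.
    apply exp_inv in H. rewrite H; ring.
Qed.
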